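(* Let $\mathcal{V}$ be a non-trivial quantale, and let $\mathsf{F},\mathsf{G}\colon\mathbf{Set}\to\mathbf{Set}$ be functors with Kantorovich liftings $\overline{\mathsf{F}}$ and $\overline{\mathsf{G}}$ to $\mathbf{Cat}(\mathcal{V})$, respectively. Then the composite $\overline{\mathsf{G}}\,\overline{\mathsf{F}}$ is a Kantorovich lifting of $\mathsf{G}\mathsf{F}$.
   Context: A quantale $(\mathcal{V},\otimes,k)$ is a complete lattice with commutative monoid structure, each $u\otimes-$ preserving joins, $\hom(u,-)$ its right adjoint; non-trivial: $\bot\ne\top$. $\mathcal{V}$-categories $(X,a)$: $k\le a(x,x)$, $a(x,y)\otimes a(y,z)\le a(x,z)$; $\mathcal{V}$-functors: $a(x,y)\le b(fx,fy)$; category $\mathbf{Cat}(\mathcal{V})$ with forgetful functor $|-|$. A lifting of $\mathsf{F}$ is a functor $\overline{\mathsf{F}}$ on $\mathbf{Cat}(\mathcal{V})$ with $|\overline{\mathsf{F}}-|=\mathsf{F}|-|$. $\mathcal{V}$ denotes $(\mathcal{V},\hom)$, $\mathcal{V}^\kappa$ has $[f,g]=\bigwedge_i\hom(f(i),g(i))$. A $\kappa$-ary $\mathcal{V}$-valued predicate lifting for $\mathsf{F}$ is a natural transformation $\mathbf{Set}(-,\mathcal{V}^\kappa)\to\mathbf{Set}(\mathsf{F}-,\mathcal{V})$; the Kantorovich lifting $\mathsf{F}^{\Lambda}$ of a class $\Lambda$ sends $(X,a)$ to $\mathsf{F}X$ with structure $\bigwedge\hom(\lambda_X(f)(\mathfrak{x}),\lambda_X(f)(\mathfrak{y}))$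 over $\kappa$-ary $\lambda\in\Lambda$ and $\mathcal{V}$-functors $f\colon(X,a)\to\mathcal{V}^\kappa$; a lifting is Kantorovich if it equals $\mathsf{F}^{\Lambda}$ for some class $\Lambda$. *)

(* Defs.v *)
Set Implicit Arguments.

Unset Strict Implicit.
From Stdlib Require Import FunctionalExtensionality.

Record quantale := Quantale {
  qT :> Type;
  qle : qT -> qT -> Prop;
  qle_refl : forall x, qle x x;
  qle_trans : forall x y z, qle x y -> qle y z -> qle x z;
  qle_antisym : forall x y, qle x y -> qle y x -> x = y;
  qsup : (qT -> Prop) -> qT;
  qsup_ub : forall (S : qT -> Prop) x, S x -> qle x (qsup S);
  qsup_least : forall (S : qT -> Prop) y, (forall x, S x -> qle x y) -> qle (qsup S) y;
  qten : qT -> qT -> qT;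
  qk : qT;
  qten_assoc : forall x y z, qten x (qten y z) = qten (qten x y) z;
  qten_comm : forall x y, qten x y = qten y x;
  qten_unit : forall x, qten qk x = x;
  qten_sup : forall u (S : qT -> Prop),
      qten u (qsup S) = qsup (fun y => exists x, S x /\ y = qten u x);
  qhom : qT -> qT -> qT;
  qhom_adj : forall u v w, qle (qten u w) v <-> qle w (qhom u v)
}.
Arguments qle {q} _ _.
Arguments qsup {q} _.
Arguments qten {q} _ _.
Arguments qk {q}.
Arguments qhom {q} _ _.

Section Q.
Variable V : quantale.

Definition qinf (S : V -> Prop) : V := qsup (fun w => forall s, S s -> qle w s).
Definition qbot : V := qsup (fun _ => False).
Definition qtop : V := qsup (fun _ => True).
Definition nontrivial : Prop := qbot <> qtop.

Definition is_vcat (X : Type) (a : X -> X -> V) : Prop :=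
  (forall x, qle qk (a x x)) /\
  (forall x y z, qle (qten (a x y) (a y z)) (a x z)).

Definition is_vfunctor (X Y : Type) (a : X -> X -> V) (b : Y -> Y -> V)
  (f : X -> Y) : Prop := forall x y, qle (a x y) (b (f x) (f y)).

Definition powV (kappa : Type) (f g : kappa -> V) : V :=
  qinf (fun r => exists i, r = qhom (f i) (g i)).
End Q.

Record functor := Functor {
  fobj :> Type -> Type;
  fmap : forall A B : Type, (A -> B) -> fobj A -> fobj B;
  fmap_id : forall A (t : fobj A), fmap (fun a : A => a) t = t;
  fmap_comp : forall A B C (f : A -> B) (g : B -> C) (t : fobj A),
      fmap (fun a => g (f a)) t = fmap g (fmap f t)
}.
Arguments fmap f {A B} _ _ : rename.

Definition fcomp (G F : functor) : functor.
Proof.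
  refine (@Functor (fun X => G (F X)) (fun A B h t => fmap G (fmap F h) t) _ _).
  - intros A t.
    replace (fmap F (fun a : A => a)) with (fun u : F A => u).
    + apply fmap_id.
    + apply functional_extensionality; intro u; symmetry; apply fmap_id.
  - intros A B C f g t.
    replace (fmap F (fun a => g (f a))) with (fun u => fmap F g (fmap F f u)).
    + apply fmap_comp.
    + apply functional_extensionality; intro u; symmetry; apply fmap_comp.
Defined.

Section Lift.
Variable V : quantale.

(** * Liftings: since |Fbar -| = F |-| on objects and morphisms, a lifting
    of F amounts to assigning to each V-category structure a on X a
    V-category structure on F X, such that F f is a V-functor whenever f is. *)
Definition lifting_on (F : functor) :=
  forall X : Type, (X -> X -> V) -> F X -> F X -> V.

Definition is_lifting (F : functor) (L : lifting_on F) : Prop :=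
  (forall X (a : X -> X -> V), is_vcat a -> is_vcat (L X a)) /\
  (forall X Y (a : X -> X -> V) (b : Y -> Y -> V) (f : X -> Y),
      is_vcat a -> is_vcat b -> is_vfunctor a b f ->
      is_vfunctor (L X a) (L Y b) (fmap F f)).

Definition lift_comp (G F : functor) (LG : lifting_on G) (LF : lifting_on F)
  : lifting_on (fcomp G F) := fun X a => LG (F X) (LF X a).

(** * kappa-ary V-valued predicate liftings:
    natural transformations Set(-, V^kappa) -> Set(F-, V) *)
Record predlift (F : functor) (kappa : Type) := PredLift {
  pl :> forall X : Type, (X -> kappa -> V) -> F X -> V;
  pl_nat : forall X Y (h : X -> Y) (f : Y -> kappa -> V) (t : F X),
      pl (fun x => f (h x)) t = pl f (fmap F h t)
}.

Record plclass (F : functor) := PLClass {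
  pc_idx : Type;
  pc_arity : pc_idx -> Type;
  pc_lift : forall i, predlift F (pc_arity i)
}.
Arguments pc_idx {F} p.
Arguments pc_arity {F} p i.
Arguments pc_lift {F} p i.

Definition kantorovich (F : functor) (Lam : plclass F) : lifting_on F :=
  fun X a s t =>
    qinf (fun r => exists (i : pc_idx Lam) (f : X -> pc_arity Lam i -> V),
            is_vfunctor a (@powV V (pc_arity Lam i)) f /\
            r = qhom (pc_lift Lam i X f s) (pc_lift Lam i X f t)).

Definition is_kantorovich_lifting (F : functor) (L : lifting_on F) : Prop :=
  is_lifting L /\
  exists Lam : plclass F,
    forall X (a : X -> X -> V), is_vcat a ->
      forall s t, L X a s t = kantorovich Lam a s t.
End Lift.

(* Main.v *)
Require Import Defs.
From Stdlib Require Import FunctionalExtensionality.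

Section QL.
Variable V : quantale.

Lemma qten_monr (u x y : V) : qle x y -> qle (qten u x) (qten u y).
Proof.
  intro H. apply qhom_adj. eapply qle_trans; [exact H|]. apply qhom_adj, qle_refl.
Qed.

Lemma qten_monl (u x y : V) : qle x y -> qle (qten x u) (qten y u).
Proof. intro H. rewrite (qten_comm x), (qten_comm y). now apply qten_monr. Qed.

Lemma qten_unit_r (x : V) : qten x qk = x.
Proof. rewrite qten_comm. apply qten_unit. Qed.

Lemma qinf_lb (S : V -> Prop) s : S s -> qle (qinf S) s.
Proof. intro Hs. apply qsup_least. intros w Hw. now apply Hw. Qed.

Lemma qinf_glb (S : V -> Prop) w : (forall s, S s -> qle w s) -> qle w (qinf S).
Proof. intro H. apply qsup_ub. exact H. Qed.

Lemma qeval (u v : V) : qle (qten u (qhom u v)) v.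
Proof. apply qhom_adj, qle_refl. Qed.

Lemma powV_le (kappa : Type) (f g : kappa -> V) w :
  (forall i, qle (qten (f i) w) (g i)) -> qle w (powV f g).
Proof.
  intro H. apply qinf_glb. intros r [i ->]. apply qhom_adj, H.
Qed.

Lemma powV_ev (kappa : Type) (f g : kappa -> V) i :
  qle (qten (f i) (powV f g)) (g i).
Proof.
  apply qhom_adj. apply qinf_lb. now exists i.
Qed.

Lemma powV_vcat (kappa : Type) : is_vcat (@powV V kappa).
Proof.
  split.
  - intro f. apply powV_le. intro i. rewrite qten_unit_r. apply qle_refl.
  - intros f g h. apply powV_le. intro i.
    rewrite qten_assoc. eapply qle_trans; [apply qten_monl, powV_ev|].
    apply powV_ev.
Qed.

Lemma sup_ten (S : V -> Prop) c y :
  (forall x, S x -> qle (qten c x) y) -> qle (qten c (qsup S)) y.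
Proof.
  intro H. rewrite qten_sup. apply qsup_least. intros z [x [Hx ->]]. now apply H.
Qed.

Lemma kan_ext (A B : Type) (a : A -> A -> V) (b : B -> B -> V) (e : A -> B)
  (kappa : Type) (g : A -> kappa -> V) :
  is_vcat b -> (forall x y, qle (b (e x) (e y)) (a x y)) ->
  is_vfunctor a (@powV V kappa) g ->
  exists g' : B -> kappa -> V, is_vfunctor b (@powV V kappa) g' /\
    forall x, g' (e x) = g x.
Proof.
  intros [Hr Ht] Hff Hg.
  exists (fun u k => qsup (fun v => exists x, v = qten (g x k) (b (e x) u))).
  split.
  - intros u w. apply powV_le. intro k.
    rewrite qten_comm. apply sup_ten. intros v [x ->].
    rewrite qten_comm, <- qten_assoc.
    eapply qle_trans; [apply qten_monr, Ht|]. apply qsup_ub. now exists x.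
  - intro x. apply functional_extensionality. intro k. apply qle_antisym.
    + apply qsup_least. intros v [x0 ->].
      eapply qle_trans; [apply qten_monr, Hff|].
      eapply qle_trans; [apply qten_monr, Hg|]. apply powV_ev.
    + eapply qle_trans; [|apply qsup_ub; exists x; reflexivity].
      eapply qle_trans; [|apply qten_monr, (Hr (e x))].
      rewrite qten_unit_r. apply qle_refl.
Qed.

Lemma yoneda_vf (X : Type) (a : X -> X -> V) : is_vcat a ->
  is_vfunctor a (@powV V X) (fun x z => a z x).
Proof.
  intros [Hr Ht] x y. apply powV_le. intro z. apply Ht.
Qed.

Lemma yoneda_ff (X : Type) (a : X -> X -> V) : is_vcat a ->
  forall x y, qle (@powV V X (fun z => a z x) (fun z => a z y)) (a x y).
Proof.
  intros [Hr Ht] x y.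
  apply qle_trans with (y := qten qk (@powV V X (fun z => a z x) (fun z => a z y))).
  { rewrite qten_unit. apply qle_refl. }
  eapply qle_trans. { apply qten_monl. apply (Hr x). }
  apply (@powV_ev X (fun z => a z x) (fun z => a z y) x).
Qed.
End QL.

Section Comp.
Variable V : quantale.
Variables F G : functor.
Variable LF : lifting_on V F.
Variable LamG : plclass V G.

Definition cidx : Type :=
  {i : pc_idx LamG & {Z : Type & {g : F (Z -> V) -> pc_arity (p:=LamG) i -> V |
     is_vfunctor (LF (Z -> V) (@powV V Z)) (@powV V (pc_arity (p:=LamG) i)) g}}}.

Definition carity (j : cidx) : Type := projT1 (projT2 j).

Definition cfun (j : cidx) : F (carity j -> V) -> pc_arity (p:=LamG) (projT1 j) -> V :=
  proj1_sig (projT2 (projT2 j)).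

Definition cpl (j : cidx) : forall X : Type, (X -> carity j -> V) -> fcomp G F X -> V :=
  fun X h t => pc_lift (p:=LamG) (projT1 j) (F X) (fun u => cfun j (fmap F h u)) t.

Lemma cpl_nat (j : cidx) : forall X Y (h : X -> Y) (f : Y -> carity j -> V) (t : fcomp G F X),
  cpl j X (fun x => f (h x)) t = cpl j Y f (fmap (fcomp G F) h t).
Proof.
  intros X Y h f t. unfold cpl. simpl.
  rewrite <- pl_nat. f_equal. apply functional_extensionality. intro u.
  f_equal. apply fmap_comp.
Qed.

Definition cclass : plclass V (fcomp G F) :=
  @PLClass V (fcomp G F) cidx carity (fun j => PredLift (cpl_nat j)).
End Comp.

Theorem corollary2 (V : quantale) (HV : nontrivial V) (F G : functor)
  (LF : lifting_on V F) (LG : lifting_on V G) :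
  is_kantorovich_lifting LF -> is_kantorovich_lifting LG ->
  is_kantorovich_lifting (lift_comp LG LF).
Proof.
  intros [HFl [LamF HF]] [HGl [LamG HG]].
  split.
  - split.
    + intros X a Ha. unfold lift_comp. apply (proj1 HGl). apply (proj1 HFl). exact Ha.
    + intros X Y a b f Ha Hb Hf. unfold lift_comp. simpl.
      apply (proj2 HGl); try apply (proj1 HFl); try assumption.
      apply (proj2 HFl); assumption.
  - exists (@cclass V F G LF LamG). intros X a Ha s t. unfold lift_comp.
    rewrite (HG (F X) (LF X a) (proj1 HFl X a Ha)).
    unfold kantorovich. apply qle_antisym.
    + apply qinf_glb. intros r [j [h [Hh ->]]].
      destruct j as [i [Z [g Hg]]].
      apply qinf_lb. exists i. exists (fun u => g (fmap F h u)). split; [|reflexivity].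
      intros u v. eapply qle_trans; [|apply Hg].
      apply (proj2 HFl); auto. apply powV_vcat.
    + apply qinf_glb. intros r [i [g [Hg ->]]].
      pose (y := fun (x z : X) => a z x).
      pose (b := LF (X -> V) (@powV V X)).
      assert (Hb : is_vcat b) by (apply (proj1 HFl); apply powV_vcat).
      assert (Hff : forall u v, qle (b (fmap F y u) (fmap F y v)) (LF X a u v)).
      { intros u v. unfold b. rewrite (HF X a Ha), (HF _ _ (@powV_vcat V X)).
        unfold kantorovich. apply qinf_glb. intros r [l [f [Hf ->]]].
        destruct (@kan_ext V X (X -> V) a (@powV V X) y _ f (@powV_vcat V X)
                    (@yoneda_ff V X a Ha) Hf) as [f' [Hf' Hf'e]].
        apply qinf_lb. exists l, f'. split; [exact Hf'|].
        rewrite <- !pl_nat.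
        replace (fun x => f' (y x)) with f; [reflexivity|].
        apply functional_extensionality. intro x. symmetry. apply Hf'e. }
      destruct (@kan_ext V (F X) (F (X -> V)) (LF X a) b (fmap F y) _ g Hb Hff Hg)
        as [g' [Hg' Hg'e]].
      apply qinf_lb.
      exists (existT _ i (existT _ X (exist _ g' Hg'))). exists y.
      split; [apply yoneda_vf; exact Ha|].
      change (qhom (pc_lift i (F X) g s) (pc_lift i (F X) g t) =
              qhom (pc_lift i (F X) (fun u => g' (fmap F y u)) s)
                   (pc_lift i (F X) (fun u => g' (fmap F y u)) t)).
      replace (fun u => g' (fmap F y u)) with g; [reflexivity|].
      apply functional_extensionality. intro u. symmetry. apply Hg'e.
Qed.
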